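(* Let $f:\mathbb Z^m\to\mathbb R^N$ be a discrete isothermic net. Then there exists a function $s:\mathbb Z^m\to\mathbb R\setminus\{0\}$ such that for every elementary quadrilateral $(f,f_i,f_{ij},f_j)$ with diagonal intersection point $M$, $$\frac{l(M,f_{ij})}{l(M,f)}=\frac{s_{ij}}{s},\qquad \frac{l(M,f_j)}{l(M,f_i)}=\frac{s_j}{s_i};$$ $s$ is unique up to multiplication by a nonzero constant $\lambda$ on black points and a nonzero constant $\mu$ on white points. For any such $s$, the functions $\alpha_i=\dfrac{|f_i-f|^2}{s s_i}$ (assigned to the edge $(u,u+e_i)$) form an edge labelling, i.e. $\tau_j\alpha_i=\alpha_i$ for $j\ne i$, so that $$|f_i-f|^2=\alpha_i\, s s_i\qquad(i=1,\dots,m).$$ Replacing $s$ by $\lambda s$ on black points and $\mu s$ on white points replaces $\alpha$ by $(\lambda\mu)^{-1}\alpha$.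
   Context: Notation: for $f:\mathbb Z^m\to\mathbb R^N$, $f=f(u)$, $f_i=f(u+e_i)$, $f_{ij}=f(u+e_i+e_j)$ with $e_i$ the unit vectors, similarly for $s$; $\tau_j g(u)=g(u+e_j)$. A Q-net is a map such that each elementary quadrilateral $(f,f_i,f_{ij},f_j)$ ($i\ne j$) is planar, assumed non-degenerate (distinct vertices, no three collinear, diagonals meeting in a point $M$ distinct from the vertices). Two planar quadrilaterals $(A,B,C,D)$, $(A^*,B^*,C^*,D^* )$ are dual if $A^*B^*\parallel AB$, $B^*C^*\parallel BC$, $C^*D^*\parallel CD$, $D^*A^*\parallel DA$, $A^*C^*\parallel BD$, $B^*D^*\parallel AC$. A Q-net $f$ is a discrete Koenigs net if there is a Q-net $f^*$ with every $(f^*,f^*_i,f^*_{ij},f^*_j)$ dual to $(f,f_i,f_{ij},f_j)$. A circular net is a Q-net all of whose elementary quadrilaterals have their four vertices on a circle. A discrete isothermic net is a circular net which is a discrete Koenigs net. For collinear points $P,Q$, $l(P,Q)$ is the directed (signed) length along their line. A point $u$ is black if $u_1+\dots+u_m$ is even, white otherwise. An edge labelling is a system of real functions $\alpha_i$ on the edges parallel to the $i$-th axis, taking equal values on opposite edges of every elementary square. *)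

(* Defs.v *)
From HB Require Import structures.
From mathcomp Require Import all_boot all_order all_algebra.
Set Implicit Arguments. Unset Strict Implicit. Unset Printing Implicit Defensive.
Import Order.TTheory GRing.Theory Num.Theory.
Local Open Scope ring_scope.

Section Defs.
Variables (R : realFieldType) (m N : nat).
Notation pt := 'rV[R]_N.
Notation lat := 'rV[int]_m.

Definition e (i : 'I_m) : lat := delta_mx 0 i.

Definition dot (x y : pt) : R := (x *m y^T) 0 0.
Definition sqnorm (x : pt) : R := dot x x.

Definition collinear (P Q S : pt) : Prop := (\rank (col_mx (Q - P) (S - P)) <= 1)%N.
Definition parallel (x y : pt) : Prop := (\rank (col_mx x y) <= 1)%N.

Definition planar (A B C D : pt) : Prop :=
  (\rank (col_mx (B - A) (col_mx (C - A) (D - A))) <= 2)%N.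

Definition diag_point (A B C D M : pt) : Prop := collinear A C M /\ collinear B D M.

Definition nondegenerate (A B C D : pt) : Prop :=
  [/\ (A <> B /\ A <> C /\ A <> D /\ B <> C /\ B <> D /\ C <> D),
      [/\ ~ collinear A B C, ~ collinear A B D, ~ collinear A C D & ~ collinear B C D] &
      exists M, [/\ diag_point A B C D M, M <> A, M <> B, M <> C & M <> D]].

Definition Qnet (f : lat -> pt) : Prop :=
  forall (u : lat) (i j : 'I_m), i != j ->
    planar (f u) (f (u + e i)) (f (u + e i + e j)) (f (u + e j)) /\
    nondegenerate (f u) (f (u + e i)) (f (u + e i + e j)) (f (u + e j)).

Definition dual_quads (A B C D A' B' C' D' : pt) : Prop :=
  parallel (B' - A') (B - A) /\ parallel (C' - B') (C - B) /\
  parallel (D' - C') (D - C) /\ parallel (A' - D') (A - D) /\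
  parallel (C' - A') (D - B) /\ parallel (D' - B') (C - A).

Definition koenigs (f : lat -> pt) : Prop :=
  Qnet f /\ exists fs : lat -> pt, Qnet fs /\
    forall (u : lat) (i j : 'I_m), i != j ->
      dual_quads (f u) (f (u + e i)) (f (u + e i + e j)) (f (u + e j))
                 (fs u) (fs (u + e i)) (fs (u + e i + e j)) (fs (u + e j)).

(* four points lie on a circle: a point of their affine hull is equidistant *)
Definition concyclic (A B C D : pt) : Prop :=
  exists (x y z r : R),
    let c := A + x *: (B - A) + y *: (C - A) + z *: (D - A) in
    [/\ sqnorm (A - c) = r, sqnorm (B - c) = r, sqnorm (C - c) = r & sqnorm (D - c) = r].

Definition circular (f : lat -> pt) : Prop :=
  Qnet f /\ forall (u : lat) (i j : 'I_m), i != j ->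
    concyclic (f u) (f (u + e i)) (f (u + e i + e j)) (f (u + e j)).

Definition isothermic (f : lat -> pt) : Prop := circular f /\ koenigs f.

Definition black (u : lat) : bool := (2 %| \sum_(k < m) u 0 k)%Z.

(* The ratio conditions l(M,f_ij)/l(M,f) = s_ij/s and l(M,f_j)/l(M,f_i) = s_j/s_i,
   written as the corresponding identities between collinear vectors. *)
Definition diag_ratio (f : lat -> pt) (s : lat -> R) : Prop :=
  forall (u : lat) (i j : 'I_m), i != j -> forall M : pt,
    diag_point (f u) (f (u + e i)) (f (u + e i + e j)) (f (u + e j)) M ->
    f (u + e i + e j) - M = (s (u + e i + e j) / s u) *: (f u - M) /\
    f (u + e j) - M = (s (u + e j) / s (u + e i)) *: (f (u + e i) - M).

Definition alpha (f : lat -> pt) (s : lat -> R) (i : 'I_m) (u : lat) : R :=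
  sqnorm (f (u + e i) - f u) / (s u * s (u + e i)).

Definition edge_labelling (a : 'I_m -> lat -> R) : Prop :=
  forall (i j : 'I_m) (u : lat), i != j -> a i (u + e j) = a i u.

Definition rescale (s : lat -> R) (lam mu : R) : lat -> R :=
  fun u => (if black u then lam else mu) * s u.

End Defs.

(* Main.v *)
Require Import Defs.
From HB Require Import structures.
From mathcomp Require Import all_boot all_order all_algebra.
From Stdlib Require Import Ring Field FunctionalExtensionality.
Import Order.TTheory GRing.Theory Num.Theory.
Local Open Scope ring_scope.
Set Implicit Arguments. Unset Strict Implicit. Unset Printing Implicit Defensive.

Section RingSetup.
Variable R : realFieldType.
Definition radd (x y : R) : R := x + y.
Definition rmul (x y : R) : R := x * y.
Definition ropp (x : R) : R := - x.
Definition rinv (x : R) : R := x^-1.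
Definition rsub (x y : R) : R := radd x (ropp y).
Definition rdiv (x y : R) : R := rmul x (rinv y).
Definition rzero : R := 0.
Definition rone : R := 1.
Lemma raddE (x y : R) : x + y = radd x y. Proof. by []. Qed.
Lemma rmulE (x y : R) : x * y = rmul x y. Proof. by []. Qed.
Lemma roppE (x : R) : - x = ropp x. Proof. by []. Qed.
Lemma rinvE (x : R) : x^-1 = rinv x. Proof. by []. Qed.
Lemma r0E : 0 = rzero :> R. Proof. by []. Qed.
Lemma r1E : 1 = rone :> R. Proof. by []. Qed.
Lemma rnatE n : n.+1%:R = radd (n%:R) 1 :> R. Proof. by rewrite /radd -addn1 natrD. Qed.
Lemma rnat0 : 0%:R = rzero :> R. Proof. by []. Qed.
Lemma rexpE (x : R) n : x ^+ n.+1 = rmul (x ^+ n) x. Proof. by rewrite exprSr. Qed.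
Lemma rexp0 (x : R) : x ^+ 0 = 1. Proof. by []. Qed.
Lemma RT : @ring_theory R rzero rone radd rmul rsub ropp eq.
Proof. split=> //=; rewrite /radd/rmul/rsub/ropp/rzero/rone/=; [exact: add0r|exact: addrC|exact: addrA|exact: mul1r|exact: mulrC|exact: mulrA|exact: mulrDl|exact: subrr]. Qed.
Lemma FT : @field_theory R rzero rone radd rmul rsub ropp rdiv rinv eq.
Proof. split=> //=; [exact: RT| rewrite /rone/rzero; apply/eqP; exact: oner_neq0| move=> p hp; apply: mulVf; exact/eqP]. Qed.
End RingSetup.

Ltac rnorm R := rewrite ?rexpE ?rexp0 ?rnatE ?rnat0 ?raddE ?rmulE ?roppE ?rinvE ?(@r0E R) ?(@r1E R);
   match goal with |- @eq _ ?a ?b => change (@eq (Num.RealField.sort R) a b) end.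

Section Vec.
Variables (R : realFieldType) (N : nat).
Implicit Types x y z : 'rV[R]_N.

Lemma dotE x y : dot x y = \sum_k x 0 k * y 0 k.
Proof. by rewrite /dot mxE; apply: eq_bigr => k _; rewrite mxE. Qed.

Lemma dotC x y : dot x y = dot y x.
Proof. by rewrite !dotE; apply: eq_bigr => k _; rewrite mulrC. Qed.

Lemma dotDl x y z : dot (x + y) z = dot x z + dot y z.
Proof. by rewrite !dotE -big_split; apply: eq_bigr => k _; rewrite mxE mulrDl. Qed.

Lemma dotZl a x y : dot (a *: x) y = a * dot x y.
Proof. by rewrite !dotE mulr_sumr; apply: eq_bigr => k _; rewrite mxE mulrA. Qed.

Lemma dotNl x y : dot (- x) y = - dot x y.
Proof. by rewrite -scaleN1r dotZl mulN1r. Qed.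

Lemma dotBl x y z : dot (x - y) z = dot x z - dot y z.
Proof. by rewrite dotDl dotNl. Qed.

Lemma dotDr x y z : dot z (x + y) = dot z x + dot z y.
Proof. by rewrite dotC dotDl !(dotC z). Qed.
Lemma dotZr a x y : dot y (a *: x) = a * dot y x.
Proof. by rewrite dotC dotZl dotC. Qed.
Lemma dotBr x y z : dot z (x - y) = dot z x - dot z y.
Proof. by rewrite dotC dotBl !(dotC z). Qed.

Lemma sqnorm_eq0 x : sqnorm x = 0 -> x = 0.
Proof.
rewrite /sqnorm dotE => /eqP; rewrite psumr_eq0 => [/allP H|k _]; last exact: sqr_ge0.
apply/rowP => k; rewrite mxE; apply/eqP; rewrite -sqrf_eq0 expr2.
exact: (implyP (H k (mem_index_enum _))).
Qed.

Lemma sqnorm_neq0 x : x != 0 -> sqnorm x != 0.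
Proof. by apply: contra => /eqP /sqnorm_eq0 ->. Qed.

Lemma col_sub_l m1 m2 (A : 'M[R]_(m1, N)) (B : 'M_(m2, N)) : (A <= col_mx A B)%MS.
Proof. by have := submx_refl (col_mx A B); rewrite col_mx_sub => /andP[]. Qed.
Lemma col_sub_r m1 m2 (A : 'M[R]_(m1, N)) (B : 'M_(m2, N)) : (B <= col_mx A B)%MS.
Proof. by have := submx_refl (col_mx A B); rewrite col_mx_sub => /andP[]. Qed.

Lemma rV_sub_scal x y : (x <= y)%MS -> exists k, x = k *: y.
Proof.
case/submxP => D ->; exists (D 0 0).
by rewrite {1}(mx11_scalar D) mul_scalar_mx.
Qed.

Lemma par_l x y : x != 0 -> (\rank (col_mx x y) <= 1)%N -> exists k, y = k *: x.
Proof.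
move=> nx hr; apply: rV_sub_scal.
have s1 := col_sub_l x y.
have h : (col_mx x y <= x)%MS.
  rewrite -(mxrank_leqif_sup s1).2 eqn_leq mxrankS //=; by rewrite rank_rV nx.
exact: submx_trans (col_sub_r x y) h.
Qed.

Lemma par_r x y : y != 0 -> (\rank (col_mx x y) <= 1)%N -> exists k, x = k *: y.
Proof.
move=> ny hr; apply: rV_sub_scal.
have s1 := col_sub_r x y.
have h : (col_mx x y <= y)%MS.
  rewrite -(mxrank_leqif_sup s1).2 eqn_leq mxrankS //=; by rewrite rank_rV ny.
exact: submx_trans (col_sub_l x y) h.
Qed.

Lemma rank_col_scal k (y : 'rV[R]_N) : (\rank (col_mx (k *: y) y) <= 1)%N.
Proof.
have : (col_mx (k *: y) y <= y)%MS by rewrite col_mx_sub scalemx_sub ?submx_refl.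
move/mxrankS => h; apply: leq_trans h _; exact: rank_leq_row.
Qed.

Lemma indep (a b : 'rV[R]_N) : ~ (\rank (col_mx a b) <= 1)%N ->
  forall ka kb, ka *: a + kb *: b = 0 -> ka = 0 /\ kb = 0.
Proof.
move=> hr ka kb h.
have [ka0|kan] := eqVneq ka 0.
  move: h; rewrite ka0 scale0r add0r => /eqP; rewrite scaler_eq0 => /orP[/eqP -> //|/eqP b0].
  exfalso; apply: hr; rewrite b0.
  have : (col_mx a (0 : 'rV[R]_N) <= a)%MS by rewrite col_mx_sub submx_refl sub0mx.
  by move/mxrankS => h'; apply: leq_trans h' _; exact: rank_leq_row.
exfalso; apply: hr.
have -> : a = (- kb / ka) *: b.
  apply: (scalerI kan); rewrite scalerA mulrC divfK // scaleNr; apply/eqP.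
  by rewrite -subr_eq0 opprK h.
exact: rank_col_scal.
Qed.

Lemma plane (a b d : 'rV[R]_N) : ~ (\rank (col_mx a b) <= 1)%N ->
  (\rank (col_mx a (col_mx d b)) <= 2)%N -> exists al be, d = al *: a + be *: b.
Proof.
move=> hr hp.
have r2 : \rank (col_mx a b) = 2%N.
  apply/eqP; rewrite eqn_leq rank_leq_row /= ltnNge; exact/negP.
have s1 : (col_mx a b <= col_mx a (col_mx d b))%MS.
  by rewrite col_mx_sub col_sub_l /=; apply: submx_trans (col_sub_r d b) (col_sub_r _ _).
have : (col_mx a (col_mx d b) <= col_mx a b)%MS.
  by rewrite -(mxrank_leqif_sup s1).2 eqn_leq mxrankS //= r2.
move=> hs; have hd : (d <= col_mx a b)%MS.
  exact: submx_trans (col_sub_l d b) (submx_trans (col_sub_r a _) hs).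
case/submxP: hd => D ->.
rewrite -[D]hsubmxK mul_row_col.
exists (lsubmx D 0 0), (rsubmx D 0 0).
by rewrite {1}(mx11_scalar (lsubmx D)) {1}(mx11_scalar (rsubmx D)) !mul_scalar_mx.
Qed.

Lemma par_coef x y : y != 0 -> (\rank (col_mx x y) <= 1)%N -> x = (dot x y / sqnorm y) *: y.
Proof.
move=> ny /(par_r ny) [k ->].
by rewrite dotZl /sqnorm mulfK // sqnorm_neq0.
Qed.

End Vec.
Definition cc (R : realFieldType) (N : nat) (X : 'rV[R]_N) (l : 'I_N) : R := X 0 l.
Lemma ccE (R : realFieldType) (N : nat) (X : 'rV[R]_N) (l : 'I_N) : X 0 l = cc X l.
Proof. by []. Qed.
Ltac zero_by h T :=
  match type of h with ?L = ?Rr =>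
    first [ transitivity (L - Rr); [rewrite ?ccE; rnorm T; ring | by rewrite h subrr]
          | transitivity (Rr - L); [rewrite ?ccE; rnorm T; ring | by rewrite h subrr] ] end.

Section Core.
Variables (R : realFieldType) (N : nat).
Implicit Types A B C D M : 'rV[R]_N.
Add Ring Rring : (RT R). Add Field Rfield : (FT R).

Lemma vec_eq0 (v w : 'rV[R]_N) : v = w -> v - w = 0.
Proof. by move=> ->; rewrite subrr. Qed.

Lemma solve_lin (x e : R) : e - x = 0 -> x = e.
Proof. by move/eqP; rewrite subr_eq0 => /eqP. Qed.

Lemma core A B C D A' B' C' D' M (c1 c2 c3 c4 : R) :
  planar A B C D -> Defs.nondegenerate A B C D ->
  B' - A' = c1 *: (B - A) -> C' - B' = c2 *: (C - B) -> C' - D' = c3 *: (C - D) ->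
  D' - A' = c4 *: (D - A) ->
  parallel (C' - A') (D - B) -> parallel (D' - B') (C - A) ->
  c2 != 0 -> c3 != 0 ->
  c1 * c3 = c2 * c4 /\
  (diag_point A B C D M -> C - M = (c1 / c2) *: (A - M) /\ D - M = (c2 / c3) *: (B - M)).
Proof.
move=> hpl [[dAB [dAC [dAD [dBC [dBD dCD]]]]] [nABC nABD nACD nBCD] _].
move=> hB hC hC3 hD hd1 hd2 nc2 nc3.
have [al [be eC]] := plane nABD hpl.
have eB' : B' = A' + c1 *: (B - A) by rewrite -hB addrC subrK.
have eD' : D' = A' + c4 *: (D - A) by rewrite -hD addrC subrK.
have eC' : C' = B' + c2 *: (C - B) by rewrite -hC addrC subrK.
have eC2 : C = A + (al *: (B - A) + be *: (D - A)) by rewrite -eC addrC subrK.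
subst C' B' D' C.
have nDB : D - B != 0 by rewrite subr_eq0 eq_sym; apply/eqP.
have nCA : A + (al *: (B - A) + be *: (D - A)) - A != 0 by rewrite subr_eq0; apply/eqP; auto.
have [k ek] := par_r nDB hd1.
have [k' ek'] := par_r nCA hd2.
have indep2 := indep nABD.
have E1 : (c1 + c2 * (al - 1) - c3 * al) *: (B - A) + (c2 * be - c3 * (be - 1) - c4) *: (D - A) = 0.
  apply/rowP => l; have := f_equal (fun v : 'rV[R]_N => v 0 l) (vec_eq0 hC3); rewrite !mxE => h.
  zero_by h R.
have D1 : (c1 + c2 * (al - 1) + k) *: (B - A) + (c2 * be - k) *: (D - A) = 0.
  apply/rowP => l; have := f_equal (fun v : 'rV[R]_N => v 0 l) (vec_eq0 ek); rewrite !mxE => h.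
  zero_by h R.
have D2 : (- c1 - k' * al) *: (B - A) + (c4 - k' * be) *: (D - A) = 0.
  apply/rowP => l; have := f_equal (fun v : 'rV[R]_N => v 0 l) (vec_eq0 ek'); rewrite !mxE => h.
  zero_by h R.
have [E1a _] := indep2 _ _ E1.
have [D1a D1b] := indep2 _ _ D1.
have [D2a D2b] := indep2 _ _ D2.
have nal : al != 0.
  apply/eqP => a0; apply: nACD; rewrite /collinear a0.
  have -> : A + (0 *: (B - A) + be *: (D - A)) - A = be *: (D - A)
    by rewrite scale0r add0r addrAC subrr add0r.
  exact: rank_col_scal.
have ek2 : k = c2 * be by apply: solve_lin; zero_by D1b R.
subst k.
have ec1 : c1 = - (c2 * (al - 1)) - c2 * be by apply: solve_lin; zero_by D1a R.
subst c1.
have h3 : c3 * al = - (c2 * be) by apply: solve_lin; zero_by E1a R.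
have ec3 : c3 = - (c2 * be) / al by rewrite -h3 mulfK.
subst c3.
have h4 : k' * al = - (- (c2 * (al - 1)) - c2 * be) by apply: solve_lin; zero_by D2a R.
have ek3 : k' = - (- (c2 * (al - 1)) - c2 * be) / al by rewrite -h4 mulfK.
subst k'.
have ec4 : c4 = - (- (c2 * (al - 1)) - c2 * be) / al * be by apply: solve_lin; zero_by D2b R.
subst c4.
split.
  rnorm R; field; rewrite -(r0E R); exact/eqP.
case=> hAC hBD.
have [t et] := par_l nCA hAC.
have [tau etau] := par_l nDB hBD.
have eM : M = A + t *: (A + (al *: (B - A) + be *: (D - A)) - A) by rewrite -et addrC subrK.
subst M.
have F : (t * al - 1 + tau) *: (B - A) + (t * be - tau) *: (D - A) = 0.
  apply/rowP => l; have := f_equal (fun v : 'rV[R]_N => v 0 l) (vec_eq0 etau); rewrite !mxE => h.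
  zero_by h R.
have [F1 F2] := indep2 _ _ F.
have etau2 : tau = t * be by apply: solve_lin; zero_by F2 R.
subst tau.
have ht : t * (al + be) = 1 by apply: solve_lin; zero_by F1 R.
have nab : al + be != 0 by apply/eqP => ab0; move: ht; rewrite ab0 mulr0 => /eqP; rewrite eq_sym oner_eq0.
have et2 : t = (al + be)^-1 by apply: (mulIf nab); rewrite ht mulVf.
subst t.
have nbe : be != 0.
  apply/eqP => b0; move: nc3; rewrite b0 mulr0 oppr0 mul0r eqxx //.
split; apply/rowP => l; rewrite !mxE ?ccE; rnorm R; field; rewrite -?(r0E R);
  repeat split; apply/eqP => //; rewrite /ropp /rmul oppr_eq0 mulf_neq0 //.
Qed.
End Core.
Ltac eq_by h c T :=
  apply/eqP; rewrite -subr_eq0; apply/eqP;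
  match type of h with ?L = ?Rr =>
    transitivity ((c : T) * (L - Rr)); [rewrite ?ccE; rnorm T; ring | by rewrite h subrr mulr0] end.

Ltac vec_by h T :=
  let l0 := fresh "l0" in let hh := fresh "hh" in
  apply/rowP => l0; have hh := f_equal (fun v : matrix _ _ _ => v 0 l0) h; rewrite !mxE in hh; rewrite !mxE;
  first [eq_by hh (1 : T) T | eq_by hh (-1 : T) T].

Ltac vring T := let l0 := fresh "l0" in apply/rowP => l0; rewrite !mxE ?ccE; rnorm T; ring.

Section Circle.
Variables (R : realFieldType) (N : nat).
Implicit Types A B C D M : 'rV[R]_N.
Add Ring Rring3 : (RT R). Add Field Rfield3 : (FT R).

Lemma power_aux (u w : 'rV[R]_N) t r : sqnorm u = r -> sqnorm (u + w) = r ->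
  dot ((-t) *: w) ((1 - t) *: w) = sqnorm (u + t *: w) - r.
Proof.
rewrite /sqnorm !dotDl !dotDr !dotZl !dotZr (dotC w u).
move: (dot u u) (dot u w) (dot w w) => X Y Z hu huw; subst r.
eq_by huw (- t) R.
Qed.

Lemma power A B C D M : concyclic A B C D -> collinear A C M -> collinear B D M ->
  A != C -> B != D -> dot (A - M) (C - M) = dot (B - M) (D - M).
Proof.
move=> [x [y [z [r]]]] /= [hA hB hC hD] cACM cBDM nAC nBD.
set c := A + x *: (B - A) + y *: (C - A) + z *: (D - A) in hA hB hC hD.
have nCA : C - A != 0 by rewrite subr_eq0 eq_sym.
have nDB : D - B != 0 by rewrite subr_eq0 eq_sym.
have [t et] := par_l nCA cACM.
have [t' et'] := par_l nDB cBDM.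
have e1 : forall (P Q : 'rV[R]_N) s, M - P = s *: (Q - P) ->
   sqnorm (P - c) = r -> sqnorm (Q - c) = r ->
   dot (P - M) (Q - M) = sqnorm (M - c) - r.
  move=> P Q s hs hP hQ.
  have -> : P - M = (- s) *: (Q - P) by vec_by hs R.
  have -> : Q - M = (1 - s) *: (Q - P).
    by vec_by hs R.
  have -> : M - c = (P - c) + s *: (Q - P) by vec_by hs R.
  apply: power_aux => //.
  by rewrite (_ : P - c + (Q - P) = Q - c) //; vring R.
rewrite (e1 A C t et hA hC) (e1 B D t' et' hB hD) //.
Qed.

Lemma edge_lab A B C D M (rho sig : R) : concyclic A B C D -> diag_point A B C D M ->
  A != C -> B != D ->
  C - M = rho *: (A - M) -> D - M = sig *: (B - M) ->
  sqnorm (C - D) = rho * sig * sqnorm (B - A).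
Proof.
move=> hc [h1 h2] nAC nBD hr hs.
have hp := power hc h1 h2 nAC nBD.
rewrite hr hs dotZr in hp.
have -> : C - D = rho *: (A - M) - sig *: (B - M) by rewrite -hr -hs opprB addrA subrK.
have -> : B - A = (B - M) - (A - M) by rewrite opprB addrA subrK.
move: (A - M) (B - M) hp => u w hp.
rewrite /sqnorm !dotBl !dotBr !dotZl !dotZr (dotC u w) in hp *.
move: (dot u u) (dot w w) (dot w u) hp => X Y Z hp.
eq_by hp (rho - sig) R.
Qed.
End Circle.
Section IntLemmas.

Lemma int_ind2 (P : int -> Prop) : P 0 -> (forall n, P n -> P (n + 1)) ->
  (forall n, P (n + 1) -> P n) -> forall n, P n.
Proof.
move=> P0 Hs Hp x.
have H1 : forall n : nat, P n -> P n.+1.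
  by move=> n Hn; rewrite -addn1 PoszD; apply: Hs.
have H2 : forall n : nat, P (- n%:Z) -> P (- n.+1%:Z).
  move=> n Hn; apply: Hp; suff -> : - (n.+1)%:Z + 1 = - n%:Z by [].
  by rewrite intS opprD addrC addNKr.
exact: (@int_rect P P0 H1 H2 x).
Qed.

Lemma black_parity (S : int) : (2 %| S + 1)%Z = ~~ (2 %| S)%Z.
Proof.
case: S => n; rewrite !dvdzE.
  by rewrite -PoszD addn1 /= -[(1+1)%N]/2%N !dvdn2 !oddS !negbK.
case: n => [|n] //.
have -> : Negz n.+1 + 1 = Negz n by rewrite !NegzE intS opprD addrC addNKr intS.
by rewrite /= -[(1+1)%N]/2%N !dvdn2 !oddS !negbK.
Qed.
End IntLemmas.
Ltac eq_by2 h c h' c' T :=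
  apply/eqP; rewrite -subr_eq0; apply/eqP;
  match type of h with ?L = ?Rr => match type of h' with ?L' = ?Rr' =>
    transitivity ((c : T) * (L - Rr) + (c' : T) * (L' - Rr'));
      [rewrite ?ccE; rnorm T; ring | by rewrite h h' !subrr !mulr0 addr0] end end.

Section OneDim.
Variable R : realFieldType.
Add Ring Rring5 : (RT R). Add Field Rfield5 : (FT R).

Definition Lf (g : int -> R) (n : int) : R :=
  match n with
  | Posz k => \prod_(t < k) g t%:Z
  | Negz k => (\prod_(t < k.+1) g (Negz t))^-1
  end.

Lemma Lf0 g : Lf g 0 = 1.
Proof. by rewrite /= big_ord0. Qed.

Lemma Lf_nz g : (forall t, g t != 0) -> forall n, Lf g n != 0.
Proof.
move=> gn [k|k] /=; last rewrite invr_eq0; by apply/prodf_neq0 => t _.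
Qed.

Lemma Lf_succ g : (forall t, g t != 0) -> forall n, Lf g (n + 1) = g n * Lf g n.
Proof.
move=> gn [k|[|k]].
- by rewrite -PoszD addn1 /= big_ord_recr /= mulrC.
- by rewrite (_ : Negz 0 + 1 = 0) // /= big_ord0 big_ord1 divff.
- have -> : Negz k.+1 + 1 = Negz k by rewrite !NegzE intS opprD addrC addNKr intS.
  by rewrite /= [in RHS]big_ord_recr /= invfM mulrCA mulfV // mulr1.
Qed.

Lemma Lf_comm g g' H : (forall t, g t != 0) -> (forall t, g' t != 0) ->
  (forall t, g t * H (t + 1) = H t * g' t) ->
  forall n, Lf g' n * H 0 = Lf g n * H n.
Proof.
move=> gn g'n hc; apply: int_ind2.
- by rewrite !Lf0.
- move=> n IH; rewrite !Lf_succ //; have h2 := hc n.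
  move: (H (n + 1)) (H n) (g n) (g' n) (Lf g n) (Lf g' n) (H 0) IH h2 => a b c d x y z IH h2.
  eq_by2 IH d h2 (- x) R.
- move=> n; rewrite !Lf_succ // => IH; apply: (mulfI (g'n n)); have h2 := hc n.
  move: (H (n + 1)) (H n) (g n) (g' n) (Lf g n) (Lf g' n) (H 0) IH h2 => a b c d x y z IH h2.
  eq_by2 IH (1 : R) h2 x R.
Qed.

Lemma const_line (T : Type) (psi : int -> T) : (forall n, psi (n + 1) = psi n) ->
  forall n, psi n = psi 0.
Proof.
move=> h; apply: int_ind2 => // n; first by rewrite h.
by rewrite h.
Qed.
End OneDim.
Section Lattice.
Variables (m : nat).
Local Notation lat := 'rV[int]_m.

Definition zk (k : nat) (u : lat) : lat := \row_l (if (k <= l)%N then u 0 l else 0).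

Lemma eE (i l : 'I_m) : (e i : lat) 0 l = (l == i)%:R.
Proof. by rewrite /e mxE. Qed.

Lemma coord_e (u : lat) (i l : 'I_m) : (u + e i) 0 l = u 0 l + (l == i)%:R.
Proof. by rewrite mxE eE. Qed.

Lemma zk0 u : zk 0 u = u.
Proof. by apply/rowP => l; rewrite mxE. Qed.

Lemma zkm u : zk m u = 0.
Proof. by apply/rowP => l; rewrite !mxE leqNgt ltn_ord. Qed.

Lemma zk_e k u (i : 'I_m) : zk k (u + e i) = if (k <= i)%N then zk k u + e i else zk k u.
Proof.
apply/rowP => l; case: ifP => hk; rewrite !mxE ?eE.
  case: (eqVneq l i) => [->|nli]; first by rewrite hk.
  by case: ifP; rewrite ?addr0.
case: (eqVneq l i) => [->|nli]; first by rewrite hk.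
by case: ifP; rewrite ?addr0.
Qed.

Lemma zk_split (i : 'I_m) u : zk i u = zk i.+1 u + (u 0 i) *: e i.
Proof.
apply/rowP => l; rewrite !mxE ?eE.
case: (eqVneq l i) => [->|nli]; first by rewrite leqnn ltnn add0r mulr1.
rewrite andbF mulr0 addr0 ltn_neqAle.
have -> : (nat_of_ord i != l) by rewrite eq_sym; exact: nli.
by [].
Qed.

Lemma desc (P : nat -> Prop) : P m -> (forall k, (k < m)%N -> P k.+1 -> P k) ->
  forall k, (k <= m)%N -> P k.
Proof.
move=> Pm Hs k hk; move: {2}(m - k)%N (erefl (m - k)%N) => d.
elim: d k hk => [|d IH] k hk hd.
  have -> : k = m by apply/eqP; rewrite eqn_leq hk /= -subn_eq0 hd.
  exact: Pm.
have km : (k < m)%N by rewrite -subn_gt0 hd.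
apply: Hs => //; apply: IH => //.
by rewrite subnS hd.
Qed.

Lemma lat_const (T : Type) (phi : lat -> T) : (forall i u, phi (u + e i) = phi u) ->
  forall u, phi u = phi 0.
Proof.
move=> h u.
suff H : forall k, (k <= m)%N -> phi (zk k u) = phi 0 by rewrite -(H 0%N) ?zk0.
apply: desc; first by rewrite zkm.
move=> k km IH; pose ok := Ordinal km.
rewrite (zk_split ok) -IH.
pose psi := fun n : int => phi (zk k.+1 u + n *: e ok).
have hpsi : forall n, psi (n + 1) = psi n.
  by move=> n; rewrite /psi scalerDl scale1r addrA h.
have := const_line hpsi (u 0 ok); rewrite /psi => ->.
by rewrite scale0r addr0.
Qed.

Variable R : realFieldType.

Lemma integrate (h : 'I_m -> lat -> R) :
  (forall i u, h i u != 0) ->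
  (forall i j u, h i u * h j (u + e i) = h j u * h i (u + e j)) ->
  exists w : lat -> R, (forall u, w u != 0) /\ forall i u, w (u + e i) = h i u * w u.
Proof.
move=> hn hcl.
pose fac (l : 'I_m) (u : lat) := Lf (fun t : int => h l (zk l.+1 u + t *: e l)) (u 0 l).
pose W k u := \prod_(l : 'I_m | (k <= l)%N) fac l u.
have facn : forall l u, fac l u != 0 by move=> l u; apply: Lf_nz.
have Wm : forall u, W m u = 1.
  by move=> u; apply: big_pred0 => l; rewrite leqNgt ltn_ord.
have Wk : forall k (hk : (k < m)%N) u, W k u = fac (Ordinal hk) u * W k.+1 u.
  move=> k hk u; rewrite /W (bigD1 (Ordinal hk)) //=; congr (_ * _).
  apply: eq_bigl => l; rewrite [RHS]ltn_neqAle andbC; congr (_ && _).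
  by rewrite eq_sym -(inj_eq val_inj).
have claim : forall k, (k <= m)%N -> forall u (i : 'I_m),
   ((i < k)%N -> W k (u + e i) = W k u) /\
   ((k <= i)%N -> W k (u + e i) = h i (zk k u) * W k u).
  apply: desc.
    by move=> u i; split => [_|]; [rewrite !Wm | rewrite leqNgt ltn_ord].
  move=> k km IH u i; pose ok := Ordinal km.
  rewrite !(Wk k km).
  have [IH1 IH2] := IH u i.
  case: (ltngtP i k) => hik.
  - split => // _.
    have -> : fac ok (u + e i) = fac ok u.
      rewrite /fac zk_e (ltn_geF (leq_trans hik (leqnSn k))) coord_e.
      rewrite (_ : (ok == i) = false) ?addr0 //.
      by apply/negbTE; rewrite -(inj_eq val_inj) /= neq_ltn hik orbT.
    by rewrite IH1 // (leq_trans hik).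
  - split => [//|_].
    have hf : fac ok (u + e i) * h i (zk k.+1 u) = fac ok u * h i (zk k u).
      rewrite /fac zk_e hik coord_e.
      rewrite (_ : (ok == i) = false) ?addr0; last first.
        by apply/negbTE; rewrite -(inj_eq val_inj) /= neq_ltn hik.
      rewrite [zk k u](zk_split ok u).
      have := @Lf_comm R (fun t : int => h ok (zk k.+1 u + t *: e ok))
        (fun t : int => h ok (zk k.+1 u + e i + t *: e ok))
        (fun t : int => h i (zk k.+1 u + t *: e ok)) (fun t => hn _ _) (fun t => hn _ _).
      move=> /(_ _ (u 0 ok)) /=; rewrite scale0r addr0; apply.
      move=> t; have := hcl ok i (zk k.+1 u + t *: e ok).
      have -> : zk k.+1 u + t *: e ok + e ok = zk k.+1 u + (t + 1) *: e ok.
        by rewrite scalerDl scale1r addrA.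
      by rewrite addrAC.
    by rewrite IH2 // mulrA hf -mulrA mulrCA.
  - have ei : ok = i by apply: val_inj; exact: (esym hik).
    split => [//|_].
    rewrite -ei in IH1 *.
    have -> : fac ok (u + e ok) = h ok (zk k u) * fac ok u.
      by rewrite /fac zk_e ltnn coord_e eqxx Lf_succ // (zk_split ok u).
    by rewrite IH1 // mulrA.
exists (W 0%N); split.
  by move=> u; apply/prodf_neq0 => l _.
by move=> i u; have [_ H] := claim 0%N (leq0n m) u i; rewrite H // zk0.
Qed.
End Lattice.
Section Black.
Variable m : nat.
Lemma black_e (u : 'rV[int]_m) (i : 'I_m) : black (u + e i) = ~~ black u.
Proof.
rewrite /black -black_parity; congr (_ %| _)%Z.
rewrite (eq_bigr (fun k => u 0 k + (k == i)%:R)) => [|k _]; last by rewrite coord_e.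
rewrite big_split /=; congr (_ + _).
rewrite (bigD1 i) //= eqxx big1 ?addr0 // => k /negbTE ->; by [].
Qed.

Lemma black0 : black (0 : 'rV[int]_m).
Proof. by rewrite /black big1 // => k _; rewrite mxE. Qed.
End Black.
Section Cross.
Variable R : realFieldType.
Add Ring Rring7 : (RT R). Add Field Rfield7 : (FT R).
Ltac side := rewrite -?(r0E R); repeat split; first [ by apply/eqP | by change ((1:R) <> 0); apply/eqP; exact: oner_neq0 | idtac ].

Lemma cross1 (a b p q : R) : p != 0 -> b != 0 -> a * b = p * q -> a / p = q / b.
Proof.
move=> hp hb h.
have -> : a / p = q / b + (a * b - p * q) / (p * b) by rnorm R; field; side.
by rewrite h subrr mul0r addr0.
Qed.

Lemma cross2 (a b p q : R) : a != 0 -> q != 0 -> a * b = p * q -> a^-1 * p = q^-1 * b.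
Proof.
move=> ha hq h.
have -> : a^-1 * p = q^-1 * b + (p * q - a * b) / (a * q) by rnorm R; field; side.
by rewrite h subrr mul0r addr0.
Qed.

Lemma nu_rel (w c : R) (b : bool) (hw : w != 0) (hc : c != 0) :
  let h := if b then c else c^-1 in
  (if b then w else w^-1) * (if ~~ b then h * w else (h * w)^-1) * c = 1.
Proof. by case: b => /=; rnorm R; field; side. Qed.

Lemma ratio1 (nu nu1 nu2 c1 c2 : R) : nu != 0 -> nu1 != 0 -> nu2 != 0 ->
  nu * nu1 * c1 = 1 -> nu1 * nu2 * c2 = 1 -> c1 / c2 = nu2 / nu.
Proof.
move=> h0 h1 h2 e1 e2.
have ec1 : c1 = (nu * nu1)^-1 by apply: (mulfI (mulf_neq0 h0 h1)); rewrite e1 mulfV // mulf_neq0.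
have ec2 : c2 = (nu1 * nu2)^-1 by apply: (mulfI (mulf_neq0 h1 h2)); rewrite e2 mulfV // mulf_neq0.
by rewrite ec1 ec2; rnorm R; field; side.
Qed.

Lemma resc_ratio (k a b : R) : k != 0 -> b != 0 -> (k * a) / (k * b) = a / b.
Proof. by move=> hk hb; rnorm R; field; side. Qed.

Lemma alpha_edge (X rho sig s0 s1 s2 s3 : R) : s0 != 0 -> s1 != 0 -> s2 != 0 -> s3 != 0 ->
  rho = s3 / s0 -> sig = s2 / s1 ->
  rho * sig * X / (s2 * s3) = X / (s0 * s1).
Proof. by move=> h0 h1 h2 h3 -> ->; rnorm R; field; side. Qed.

Lemma alpha_resc (X a b l1 l2 : R) (bb : bool) : a != 0 -> b != 0 -> l1 != 0 -> l2 != 0 ->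
  X / ((if bb then l1 else l2) * a * ((if ~~ bb then l1 else l2) * b)) = (l1 * l2)^-1 * (X / (a * b)).
Proof. by case: bb => /= *; rnorm R; field; side. Qed.

Lemma half_eq (x y : R) : x + x = y + y -> x = y.
Proof.
move=> h; apply: (mulfI (x := 2%:R)); first by rewrite pnatr_eq0.
by rewrite !mulr_natl !mulr2n.
Qed.
Lemma rswap (a b c d : R) : a != 0 -> b != 0 -> c != 0 -> d != 0 ->
  a / b = c / d -> c / a = d / b.
Proof.
move=> ha hb hc hd h.
have -> : c / a = d / b + (d / a) * (c / d - a / b) by rnorm R; field; side.
by rewrite h subrr mulr0 addr0.
Qed.

Lemma sum_diff (x y x' y' : R) : x + y = x' + y' -> x - y = x' - y' -> x = x'.
Proof.
move=> h1 h2; apply: half_eq.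
have -> : x + x = (x + y) + (x - y) by rnorm R; ring.
by rewrite h1 h2; rnorm R; ring.
Qed.

Lemma sum_diff2 (x y x' y' : R) : x + y = x' + y' -> -1 * (x - y) = x' - y' -> x = y'.
Proof.
move=> h1 h2; apply: half_eq.
have -> : x + x = (x + y) - (-1 * (x - y)) by rnorm R; ring.
by rewrite h1 h2; rnorm R; ring.
Qed.
End Cross.
Lemma scal_inj (R : realFieldType) (N : nat) (k1 k2 : R) (v : 'rV[R]_N) :
  v != 0 -> k1 *: v = k2 *: v -> k1 = k2.
Proof.
move=> nv h; apply/eqP; rewrite -subr_eq0; apply/eqP.
have : (k1 - k2) *: v = 0 by rewrite scalerBl h subrr.
by move/eqP; rewrite scaler_eq0 (negbTE nv) orbF => /eqP.
Qed.

Lemma neq_sub (R : realFieldType) (N : nat) (x y : 'rV[R]_N) : x <> y -> y - x != 0.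
Proof. by move=> h; rewrite subr_eq0; apply/eqP => h'; apply: h. Qed.

Theorem mainTheorem15 (R : realFieldType) (m N : nat)
    (f : 'rV[int]_m -> 'rV[R]_N) (hm : (2 <= m)%N) :
  isothermic f ->
  (exists s : 'rV[int]_m -> R,
      (forall u, s u != 0) /\ diag_ratio f s /\
      (forall s' : 'rV[int]_m -> R,
         ((forall u, s' u != 0) /\ diag_ratio f s') <->
         (exists lam mu : R, [/\ lam != 0, mu != 0 & s' = rescale s lam mu]))) /\
  (forall s : 'rV[int]_m -> R, (forall u, s u != 0) -> diag_ratio f s ->
      [/\ edge_labelling (alpha f s),
          (forall (u : 'rV[int]_m) (i : 'I_m),
             sqnorm (f (u + e i) - f u) = alpha f s i u * (s u * s (u + e i))) &
          (forall lam mu : R, lam != 0 -> mu != 0 ->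
             forall (i : 'I_m) (u : 'rV[int]_m),
               alpha f (rescale s lam mu) i u = (lam * mu)^-1 * alpha f s i u)]).
Proof.
move=> [[hQ hcirc] [_ [fs [hQs hdual]]]].
have Rr := RT R.
have hm0 : (0 < m)%N by apply: leq_trans hm.
have hm1 : (1 < m)%N by [].
pose i0 : 'I_m := Ordinal hm0.
pose i1 : 'I_m := Ordinal hm1.
have ni01 : i0 != i1 by [].
have other : forall i : 'I_m, exists j, i != j.
  move=> i; case: (eqVneq i i0) => [->|ne]; first by exists i1.
  by exists i0.
pose c (i : 'I_m) u := dot (fs (u + e i) - fs u) (f (u + e i) - f u) / sqnorm (f (u + e i) - f u).
have fne : forall (i : 'I_m) u, f (u + e i) - f u != 0.
  move=> i u; have [j nij] := other i.
  have [_ [[dAB _] _ _]] := hQ u i j nij; exact: neq_sub.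
have cE : forall (i : 'I_m) u, fs (u + e i) - fs u = c i u *: (f (u + e i) - f u).
  move=> i u; have [j nij] := other i.
  have [hp _] := hdual u i j nij.
  exact: par_coef (fne i u) hp.
have cn : forall (i : 'I_m) u, c i u != 0.
  move=> i u; have [j nij] := other i.
  have [_ [[dAB _] _ _]] := hQs u i j nij.
  apply/eqP => c0; move: (cE i u); rewrite c0 scale0r => /eqP; rewrite subr_eq0 => /eqP.
  by move=> h; apply: dAB; rewrite h.
have comm : forall (i j : 'I_m) (u : 'rV[int]_m), u + e i + e j = u + e j + e i by move=> i j u; rewrite addrAC.
have coreQ : forall (i j : 'I_m) u, i != j ->
   c i u * c i (u + e j) = c j (u + e i) * c j u /\
   (forall M, diag_point (f u) (f (u + e i)) (f (u + e i + e j)) (f (u + e j)) M ->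
     f (u + e i + e j) - M = (c i u / c j (u + e i)) *: (f u - M) /\
     f (u + e j) - M = (c j (u + e i) / c i (u + e j)) *: (f (u + e i) - M)).
  move=> i j u nij.
  have [hp hnd] := hQ u i j nij.
  have [_ [_ [_ [_ [hd1 hd2]]]]] := hdual u i j nij.
  have h3 : fs (u + e i + e j) - fs (u + e j) = c i (u + e j) *: (f (u + e i + e j) - f (u + e j)).
    by rewrite comm cE.
  have [K1 K2] := core 0 hp hnd (cE i u) (cE j (u + e i)) h3 (cE j u) hd1 hd2
     (cn _ _) (cn _ _).
  split => // M hM.
  have [K1' K2'] := core M hp hnd (cE i u) (cE j (u + e i)) h3 (cE j u) hd1 hd2
     (cn _ _) (cn _ _).
  exact: K2' hM.
pose h (i : 'I_m) u := if black u then c i u else (c i u)^-1.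
have hn : forall i u, h i u != 0 by move=> i u; rewrite /h; case: ifP; rewrite ?invr_eq0.
have hcl : forall i j u, h i u * h j (u + e i) = h j u * h i (u + e j).
  move=> i j u; case: (eqVneq i j) => [->//|nij].
  have [K1 _] := coreQ i j u nij.
  rewrite /h !black_e; case: (black u) => /=.
    exact: cross1 (cn _ _) (cn _ _) K1.
  exact: cross2 (cn _ _) (cn _ _) K1.
have [w [wn wE]] := integrate hn hcl.
pose nu u := if black u then w u else (w u)^-1.
have nun : forall u, nu u != 0 by move=> u; rewrite /nu; case: ifP; rewrite ?invr_eq0.
have nuc : forall i u, nu u * nu (u + e i) * c i u = 1.
  move=> i u; rewrite /nu black_e wE.
  exact: (nu_rel (black u) (wn u) (cn i u)).
have diag_nu : diag_ratio f nu.
  move=> u i j nij M hM.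
  have [_ K2] := coreQ i j u nij.
  have [-> ->] := K2 M hM.
  split; congr (_ *: _).
    exact: ratio1 (nun _) (nun _) (nun _) (nuc i u) (nuc j (u + e i)).
  apply: ratio1 (nun _) (nun _) (nun _) (nuc j (u + e i)) _.
  by rewrite [nu _ * nu _]mulrC (comm i j u); apply: nuc.
split; last first.
  move=> s sn hs; split.
  - move=> i j u nij; rewrite /alpha -(comm i j u).
    have [_ [[dAB [dAC [dAD [dBC [dBD dCD]]]]] _ [M [hM _ _ _ _]]]] := hQ u i j nij.
    have [hr hsg] := hs u i j nij M hM.
    have hAC : f u != f (u + e i + e j) by apply/eqP.
    have hBD : f (u + e i) != f (u + e j) by apply/eqP.
    rewrite (edge_lab (hcirc u i j nij) hM hAC hBD hr hsg).
    exact: alpha_edge.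
  - by move=> u i; rewrite /alpha divfK // mulf_neq0.
  - move=> lam mu hl hmu i u; rewrite /alpha /rescale black_e.
    exact: alpha_resc.
exists nu; split; first exact: nun.
split; first exact: diag_nu.
move=> s'; split.
  case=> s'n hs'.
  pose r u := s' u / nu u.
  have rn : forall u, r u != 0 by move=> u; rewrite mulf_neq0 // invr_neq0.
  have rE : forall u (i j : 'I_m), i != j ->
      r (u + e i + e j) = r u /\ r (u + e j) = r (u + e i).
    move=> u i j nij.
    have [_ [_ _ [M [hM hMA hMB _ _]]]] := hQ u i j nij.
    have [a1 a2] := diag_nu u i j nij M hM.
    have [b1 b2] := hs' u i j nij M hM.
    have e1 := scal_inj (neq_sub hMA) (etrans (esym a1) b1).
    have e2 := scal_inj (neq_sub hMB) (etrans (esym a2) b2).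
    split; [exact: rswap (nun _) (nun _) (s'n _) (s'n _) e1
           | exact: rswap (nun _) (nun _) (s'n _) (s'n _) e2].
  have rsh : forall v (i : 'I_m), r (v + e i) = r (v + e i0).
    move=> v i; case: (eqVneq i i0) => [->//|ne].
    by have [_ H] := rE v i i0 ne; rewrite H.
  have r2 : forall v (i : 'I_m), r (v + e i + e i0) = r v.
    move=> v i; case: (eqVneq i i0) => [->|ne]; last by have [H _] := rE v i i0 ne.
    pose v' := v + e i0 - e i1.
    have n10 : i1 != i0 by rewrite eq_sym.
    have [H _] := rE v' i1 i0 n10.
    have -> : v + e i0 + e i0 = v' + e i1 + e i0 by rewrite /v' subrK.
    by rewrite H /v' (addrAC v (e i0) (- e i1)) -(rsh (v - e i1) i1) subrK.
  pose sg (u : 'rV[int]_m) : R := if black u then 1 else -1.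
  pose G u := r u + r (u + e i0).
  pose K u := sg u * (r u - r (u + e i0)).
  have GE : forall u, G u = G 0.
    by apply: lat_const => i u; rewrite /G (rsh u i) (r2 u i) addrC.
  have KE : forall u, K u = K 0.
    apply: lat_const => i u; rewrite /K /sg black_e (rsh u i) (r2 u i).
    by case: (black u) => /=; rewrite ?mulN1r ?mul1r opprB.
  have rval : forall u, r u = if black u then r 0 else r (e i0).
    move=> u; have g := GE u; have k := KE u.
    rewrite /G /K /sg black0 add0r mul1r in g k.
    case: (black u) k => /= k.
      by apply: sum_diff g _; rewrite -k mul1r.
    exact: sum_diff2 g k.
  exists (r 0), (r (e i0)); split; [exact: rn | exact: rn |].
  apply: functional_extensionality => u; rewrite /rescale -rval /r divfK //.
case=> lam [mu [hl hmu ->]].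
have kn : forall b : bool, (if b then lam else mu) != 0 by case.
split.
  by move=> u; rewrite /rescale mulf_neq0.
move=> u i j nij M hM; have [a1 a2] := diag_nu u i j nij M hM.
rewrite /rescale !black_e negbK.
by rewrite !(resc_ratio _ (kn _) (nun _)).
Qed.
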